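(* Let $v_1\ge v_2\ge\cdots\ge v_n>0$, $1\ge q_1\ge\cdots\ge q_n\ge0$, and $a_1,\dots,a_n\ge0$ with $\sum_j a_j>0$. For $\sigma\in S_n$ let $f(\sigma)=\frac{\sum_i v_{\sigma_i}a_iq_i}{\sum_j v_{\sigma_j}a_j}$, and let $\lambda^q=f(\mathrm{id})=\frac{\sum_i v_ia_iq_i}{\sum_j v_ja_j}$ (the quality ranking). Then $$\max_{\sigma\in S_n} f(\sigma)\;\le\;\frac{v_1}{v_n}\,\lambda^q.$$ Moreover the factor $v_1/v_n$ is tight: for every $c\in(0,1)$ and every $\delta>0$ there exist appeals $a_1,a_2,a_3\ge0$ (not all zero) and qualities $1\ge q_1\ge q_2\ge q_3\ge0$ such that, with $n=3$ and visibilities $(v_1,v_2,v_3)=(1,1,c)$, one has $\max_\sigma f(\sigma)\ge(\frac{1}{c}-\delta)\lambda^q$.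
   Context: Static trial-offer market: a ranking $\sigma\in S_n$ places product $i$ in position $\sigma_i$, position $p$ has visibility $v_p$, product $i$ is tried with probability $\frac{v_{\sigma_i}a_i}{\sum_j v_{\sigma_j}a_j}$ and then purchased with probability $q_i$; $f(\sigma)$ is the expected number of purchases in one step. The quality ranking is the identity ranking $\sigma_i=i$. *)

(* Defs.v *)
From HB Require Import structures.
From mathcomp Require Import all_boot all_order all_algebra all_fingroup.
Set Implicit Arguments. Unset Strict Implicit. Unset Printing Implicit Defensive.
Import Order.TTheory GRing.Theory Num.Theory.
Local Open Scope ring_scope.

(* Products/positions indexed by 'I_n (paper's index i corresponds to i-1).
   A ranking sigma : 'S_n places product i at position sigma i. *)
Definition ftrial (R : realFieldType) (n : nat) (v a q : 'I_n -> R)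
  (s : 'S_n) : R :=
  (\sum_(i < n) v (s i) * a i * q i) / (\sum_(j < n) v (s j) * a j).

Definition lambdaq (R : realFieldType) (n : nat) (v a q : 'I_n -> R) : R :=
  ftrial v a q 1%g.

Definition fmax (R : realFieldType) (n : nat) (v a q : 'I_n -> R) : R :=
  \big[Num.max/ftrial v a q 1%g]_(s : 'S_n) ftrial v a q s.

Definition vis3 (R : realFieldType) (c : R) : 'I_3 -> R :=
  fun i => [:: 1; 1; c]`_i.

(* Main.v *)
Require Import Defs.
From HB Require Import structures.
From mathcomp Require Import all_boot all_order all_algebra all_fingroup.
From mathcomp Require Import ring lra.
Import Order.TTheory GRing.Theory Num.Theory.
Local Open Scope ring_scope.

Lemma bigmax_ub (R : realFieldType) (T : finType) (F : T -> R) x0 s :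
  F s <= \big[Num.max/x0]_(t : T) F t.
Proof.
rewrite unlock /=.
have : s \in index_enum T by exact: mem_index_enum.
elim: (index_enum T) => // t r IH; rewrite inE /= => /orP [/eqP<-|H].
  by rewrite le_max lexx.
by rewrite le_max (IH H) orbT.
Qed.

Lemma bigmax_lb (R : realFieldType) (T : finType) (F : T -> R) x0 B :
  x0 <= B -> (forall t, F t <= B) -> \big[Num.max/x0]_(t : T) F t <= B.
Proof.
move=> H0 H; elim/big_ind: _ => // x y Hx Hy.
by rewrite ge_max Hx Hy.
Qed.

Lemma dbl (R : realFieldType) n (f g : 'I_n -> R) :
  \sum_i \sum_j f i * g j = (\sum_i f i) * (\sum_j g j).
Proof. rewrite mulr_suml; apply: eq_bigr => i _; by rewrite mulr_sumr. Qed.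

Theorem mainTheorem10 (R : realFieldType) :
  (forall (n : nat) (v a q : 'I_n.+1 -> R),
     (forall i j : 'I_n.+1, (i <= j)%N -> v j <= v i) ->
     0 < v ord_max ->
     (forall i j : 'I_n.+1, (i <= j)%N -> q j <= q i) ->
     q ord0 <= 1 ->
     0 <= q ord_max ->
     (forall i, 0 <= a i) ->
     0 < \sum_(j < n.+1) a j ->
     fmax v a q <= v ord0 / v ord_max * lambdaq v a q)
  /\
  (forall c delta : R, 0 < c -> c < 1 -> 0 < delta ->
     exists a q : 'I_3 -> R,
       (forall i, 0 <= a i) /\ (exists i, a i != 0) /\
       (forall i j : 'I_3, (i <= j)%N -> q j <= q i) /\
       q ord0 <= 1 /\ 0 <= q ord_max /\
       (c^-1 - delta) * lambdaq (vis3 c) a q <= fmax (vis3 c) a q).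
Proof.
split.
  move=> n v a q vdec vpos qdec _ qpos apos Apos.
  have qge0 i : 0 <= q i by exact: le_trans qpos (qdec i ord_max (leq_ord i)).
  have vge i : v ord_max <= v i by exact: vdec i ord_max (leq_ord i).
  have vle i : v i <= v ord0 by apply: vdec.
  have vge0 i : 0 < v i by exact: lt_le_trans vpos (vge i).
  set A := \sum_(j < n.+1) a j.
  set Aq := \sum_(j < n.+1) a j * q j.
  set D1 := \sum_(j < n.+1) a j * v j.
  set N1 := \sum_(j < n.+1) a j * v j * q j.
  have Aqge0 : 0 <= Aq by apply: sumr_ge0 => i _; apply: mulr_ge0.
  have D1pos : 0 < D1.
    apply: (lt_le_trans (mulr_gt0 vpos Apos)); rewrite /D1 mulr_sumr.
    by apply: ler_sum => i _; rewrite mulrC ler_wpM2l.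
  have cheb : Aq * D1 <= N1 * A.
    have S0 : 0 <= \sum_i \sum_j a i * a j * (v i - v j) * (q i - q j).
      apply: sumr_ge0 => i _; apply: sumr_ge0 => j _.
      rewrite -mulrA; apply: mulr_ge0; first exact: mulr_ge0.
      case: (leqP i j) => [hij|/ltnW hij].
        by apply: mulr_ge0; rewrite subr_ge0; [apply: vdec|apply: qdec].
      by rewrite -mulrNN; apply: mulr_ge0; rewrite oppr_ge0 subr_le0; [apply: vdec|apply: qdec].
    have E : forall i j, a i * a j * (v i - v j) * (q i - q j) =
      (a i * v i * q i) * a j + a i * (a j * v j * q j)
      - (a i * v i) * (a j * q j) - (a i * q i) * (a j * v j) by move=> i j; ring.
    have Seq : \sum_i \sum_j a i * a j * (v i - v j) * (q i - q j)
       = N1 * A + A * N1 - D1 * Aq - Aq * D1.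
      transitivity (\sum_i (\sum_j (a i * v i * q i) * a j + \sum_j a i * (a j * v j * q j)
      - \sum_j (a i * v i) * (a j * q j) - \sum_j (a i * q i) * (a j * v j))).
        by apply: eq_bigr => i _; rewrite -big_split -!sumrB /=; apply: eq_bigr => j _; rewrite E.
      by rewrite sumrB sumrB big_split /= !dbl.
    rewrite Seq [A * N1]mulrC [D1 * Aq]mulrC in S0.
    rewrite -subr_ge0; lra.
  have lam : lambdaq v a q = N1 / D1.
    rewrite /lambdaq /ftrial; congr (_ / _); apply: eq_bigr => i _;
      rewrite perm1; ring.
  have key s : ftrial v a q s <= v ord0 / v ord_max * lambdaq v a q.
    rewrite lam /ftrial.
    set Ns := \sum_(i < n.+1) v (s i) * a i * q i.
    set Ds := \sum_(i < n.+1) v (s i) * a i.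
    have Nle : Ns <= v ord0 * Aq.
      rewrite /Aq mulr_sumr; apply: ler_sum => i _.
      rewrite -mulrA; apply: ler_wpM2r; first by apply: mulr_ge0.
      exact: vle.
    have Dge : v ord_max * A <= Ds.
      rewrite /A mulr_sumr; apply: ler_sum => i _.
      apply: ler_wpM2r; first exact: apos.
      exact: vge.
    have vApos : 0 < v ord_max * A by apply: mulr_gt0.
    have Dpos : 0 < Ds by apply: lt_le_trans Dge.
    apply: (le_trans (y := v ord0 * Aq / (v ord_max * A))).
      rewrite ler_pdivrMr // mulrAC ler_pdivlMr //.
      apply: (le_trans (y := v ord0 * Aq * (v ord_max * A))).
        by apply: ler_wpM2r => //; exact: ltW.
      apply: ler_wpM2l => //; apply: mulr_ge0 => //; exact: ltW.
    have step : Aq / A <= N1 / D1.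
      by rewrite ler_pdivrMr // mulrAC ler_pdivlMr.
    rewrite invfM mulrACA mulrA -(mulrA (v ord0 / v ord_max)).
    apply: ler_wpM2l => //; apply: divr_ge0; exact: ltW.
  by apply: bigmax_lb => [|t]; apply: key.
move=> c delta c0 c1 d0.
set e := delta * c ^+ 2.
have e0 : 0 < e by apply: mulr_gt0 => //; apply: exprn_gt0.
exists (fun i : 'I_3 => [:: e; 1; 0]`_i), (fun i : 'I_3 => [:: 1; 0; 0]`_i).
split.
  by case=> [[|[|[|k]]]] //= _; rewrite ltW.
split; first by exists ord0 => /=; rewrite gt_eqF.
split.
  by case=> [[|[|[|k]]]] ?; case=> [[|[|[|l]]]] ? //=.
split; first by [].
split; first by [].
set A := (fun i : 'I_3 => _).
set Q := (fun i : 'I_3 => _).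
have H := bigmax_ub _ _ (ftrial (vis3 c) A Q) (ftrial (vis3 c) A Q 1%g) (tperm (inord 1 : 'I_3) (inord 2)).
apply: le_trans H.
rewrite /lambdaq /ftrial !big_ord_recl !big_ord0 /=.
have h1 : (inord 1 : 'I_3) = lift ord0 ord0 by apply: val_inj; rewrite /= inordK.
have h2 : (inord 2 : 'I_3) = lift ord0 (lift ord0 ord0) by apply: val_inj; rewrite /= inordK.
rewrite /A /Q /vis3 !perm1 !permE h1 h2 /=.

rewrite !mul1r !mulr1 !mulr0 !addr0.
have ep1 : 0 < e + 1 by lra.
have epc : 0 < e + c by lra.
rewrite mulrA ler_pdivrMr // mulrAC ler_pdivlMr //.
have hce : c^-1 * e = delta * c.
  rewrite /e; field; by rewrite gt_eqF.
have -> : (c^-1 - delta) * e * (e + c) = (delta * c - delta * e) * (e + c).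
  by rewrite mulrBl hce.
have -> : (delta * c - delta * e) * (e + c) = e - delta * e * e by rewrite /e; ring.
have hde : 0 < delta * e * e by apply: mulr_gt0 => //; apply: mulr_gt0.
have hee : 0 < e * e by apply: mulr_gt0.
rewrite mulrDr mulr1; lra.
Qed.
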